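(* Let $\mathcal P$ be a Fitting program over a bilattice $\mathcal B$. Then $Fix^{\mathcal U}_{\mathcal U}\le_k Fix^{\mathcal F}_{\mathcal U}\otimes Fix^{\mathcal T}_{\mathcal U}$.
   Context: A bilattice $\langle\mathcal B,\le_t,\le_k\rangle$ is a nonempty set with two partial orders, each making $\mathcal B$ a lattice with top and bottom. Under $\le_t$, meet and join are $\wedge,\vee$ (infinitary $\bigwedge,\bigvee$), bottom $\mathcal F$, top $\mathcal T$; under $\le_k$, meet and join are $\otimes,\oplus$ (infinitary $\bigotimes,\bigoplus$), bottom $\mathcal U$, top $\mathcal I$. Standing assumptions: $\mathcal B$ is complete for both orders, infinitely distributive, satisfies the infinitary interlacing conditions, and has a negation $\neg$ (an involution reversing $\le_t$ and preserving $\le_k$). A formula is built from literals ($A$ or $\neg A$) and elements of $\mathcal B$ using $\wedge,\vee,\otimes,\oplus,\exists,\forall$ (with built-in predicate $equal$). A clause is $P(x_1,\dots,x_n)\leftarrow\phi(x_1,\dots,x_n)$ with the body's free variables among $x_1,\dots,x_n$. A Fitting program is a finite set of clauses with no predicate letter heading more than one clause; Inst-$\mathcal P$ is its set of ground instances. $\mathcal V(\mathcal B)$: maps from ground atoms to $\mathcal B$ with pointwise orders/operations. Valuations extend to closed formulas compositionally ($v(\beta)=\beta$, connectives pointwise, $\exists$ as $\bigvee$, $\forall$ as $\bigwedge$ over closed-term instances, $v(equal(s,t))=\mathcal T$ if $s=t$ else $\mathcal F$). The contrajoin $v\bigtriangleup w$ evaluates likewise but gives $A$ the value $v(A)$ and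 $\neg A$ the value $\neg w(A)$. For $\alpha\in\{\mathcal F,\mathcal T,\mathcal U,\mathcal I\}$: $\Psi_{\mathcal P}^{\alpha}(v,w)(A)=\alpha$ if $A$ heads no member of Inst-$\mathcal P$, and $=(v\bigtriangleup w)(B)$ if $A\leftarrow B\in$ Inst-$\mathcal P$. $\Psi'^{\alpha}_{\mathcal P}(v)$ is the $\le_t$-least (resp. $\le_t$-greatest, $\le_k$-least, $\le_k$-greatest) fixpoint of $x\mapsto\Psi_{\mathcal P}^{\alpha}(x,v)$ when $\alpha=\mathcal F$ (resp. $\mathcal T,\mathcal U,\mathcal I$), obtained as the limit of the transfinite iteration from the constant valuation $\alpha$. $Fix^{\alpha}_{\mathcal U}$ denotes the $\le_k$-least fixpoint of $\Psi'^{\alpha}_{\mathcal P}$. *)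

(* Defs.v *)
From Stdlib Require Import List Arith Bool ClassicalEpsilon.
Import ListNotations.
Set Implicit Arguments.

Record prebilattice := {
  bcar :> Type;
  tle : bcar -> bcar -> Prop;
  kle : bcar -> bcar -> Prop;
  tle_refl : forall x, tle x x;
  tle_trans : forall x y z, tle x y -> tle y z -> tle x z;
  tle_antisym : forall x y, tle x y -> tle y x -> x = y;
  kle_refl : forall x, kle x x;
  kle_trans : forall x y z, kle x y -> kle y z -> kle x z;
  kle_antisym : forall x y, kle x y -> kle y x -> x = y;
  tsup : (bcar -> Prop) -> bcar;
  tinf : (bcar -> Prop) -> bcar;
  ksup : (bcar -> Prop) -> bcar;
  kinf : (bcar -> Prop) -> bcar;
  tsup_ub : forall S x, S x -> tle x (tsup S);
  tsup_least : forall S y, (forall x, S x -> tle x y) -> tle (tsup S) y;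
  tinf_lb : forall S x, S x -> tle (tinf S) x;
  tinf_greatest : forall S y, (forall x, S x -> tle y x) -> tle y (tinf S);
  ksup_ub : forall S x, S x -> kle x (ksup S);
  ksup_least : forall S y, (forall x, S x -> kle x y) -> kle (ksup S) y;
  kinf_lb : forall S x, S x -> kle (kinf S) x;
  kinf_greatest : forall S y, (forall x, S x -> kle y x) -> kle y (kinf S);
  bneg : bcar -> bcar;
  bneg_invol : forall x, bneg (bneg x) = x;
  bneg_tle : forall x y, tle x y -> tle (bneg y) (bneg x);
  bneg_kle : forall x y, kle x y -> kle (bneg x) (bneg y)
}.

Section BinOps.
Variable B : prebilattice.
Definition pair2 (a b : B) : B -> Prop := fun x => x = a \/ x = b.
Definition band (a b : B) : B := tinf B (pair2 a b).
Definition bor (a b : B) : B := tsup B (pair2 a b).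
Definition botimes (a b : B) : B := kinf B (pair2 a b).
Definition boplus (a b : B) : B := ksup B (pair2 a b).
Definition bF : B := tsup B (fun _ => False).
Definition bT : B := tinf B (fun _ => False).
Definition bU : B := ksup B (fun _ => False).
Definition bI : B := kinf B (fun _ => False).

Definition img (I : Type) (f : I -> B) : B -> Prop := fun x => exists i, x = f i.

Definition distrib (o : B -> B -> B) (Sig : (B -> Prop) -> B) : Prop :=
  forall (a : B) (S : B -> Prop), (exists x, S x) ->
    o a (Sig S) = Sig (fun y => exists x, S x /\ y = o a x).

Definition infinitely_distributive : Prop :=
  forall o Sig, In o [band; bor; botimes; boplus] ->
    In Sig [tinf B; tsup B; kinf B; ksup B] -> distrib o Sig.

Definition interlaced : Prop :=
  forall (I : Type) (f g : I -> B),
    ((forall i, kle B (f i) (g i)) ->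
       kle B (tinf B (img f)) (tinf B (img g)) /\ kle B (tsup B (img f)) (tsup B (img g))) /\
    ((forall i, tle B (f i) (g i)) ->
       tle B (kinf B (img f)) (kinf B (img g)) /\ tle B (ksup B (img f)) (ksup B (img g))).
End BinOps.

Record bilattice := {
  bpre :> prebilattice;
  b_distr : infinitely_distributive bpre;
  b_interlaced : interlaced bpre
}.

Record signature := {
  fsym : Type; farity : fsym -> nat;
  psym : Type; parity : psym -> nat
}.

Section Syntax.
Variable S : signature.

Inductive term : Type :=
| Var : nat -> term
| Fn : fsym S -> list term -> term.

Fixpoint gterm (t : term) : bool :=
  match t with
  | Var _ => false
  | Fn f l => Nat.eqb (length l) (farity S f) &&
      (fix all (l : list term) : bool :=
         match l with nil => true | t :: l => gterm t && all l end) l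
  end.

Fixpoint wfterm (t : term) : bool :=
  match t with
  | Var _ => true
  | Fn f l => Nat.eqb (length l) (farity S f) &&
      (fix all (l : list term) : bool :=
         match l with nil => true | t :: l => wfterm t && all l end) l
  end.

Fixpoint tsubst (e : nat -> term) (t : term) : term :=
  match t with
  | Var n => e n
  | Fn f l => Fn f (map (tsubst e) l)
  end.

Fixpoint occurs (x : nat) (t : term) : Prop :=
  match t with
  | Var n => n = x
  | Fn f l => (fix ex (l : list term) : Prop :=
         match l with nil => False | t :: l => occurs x t \/ ex l end) l
  end.

Definition cterm := { t : term | gterm t = true }.

Definition ground_atom (a : psym S * list term) : bool :=
  Nat.eqb (length (snd a)) (parity S (fst a)) && forallb gterm (snd a).
Definition gatom := { a : psym S * list term | ground_atom a = true }.
End Syntax.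

Arguments Var {S}.

Section Formulas.
Variables (S : signature) (B : bilattice).

Inductive atom : Type :=
| PAt : psym S -> list (term S) -> atom
| EqAt : term S -> term S -> atom.

Inductive formula : Type :=
| FPos : atom -> formula
| FNeg : atom -> formula
| FCst : bcar B -> formula
| FAnd : formula -> formula -> formula
| FOr : formula -> formula -> formula
| FOtimes : formula -> formula -> formula
| FOplus : formula -> formula -> formula
| FEx : nat -> formula -> formula
| FAll : nat -> formula -> formula.

Definition wf_atom (a : atom) : Prop :=
  match a with
  | PAt p l => length l = parity S p /\ forallb (@wfterm S) l = true
  | EqAt s t => wfterm s = true /\ wfterm t = true
  end.

Fixpoint wf_formula (phi : formula) : Prop :=
  match phi with
  | FPos a | FNeg a => wf_atom a
  | FCst _ => True
  | FAnd p q | FOr p q | FOtimes p q | FOplus p q => wf_formula p /\ wf_formula q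
  | FEx _ p | FAll _ p => wf_formula p
  end.

Definition occurs_atom (x : nat) (a : atom) : Prop :=
  match a with
  | PAt _ l => exists t, In t l /\ occurs x t
  | EqAt s t => occurs x s \/ occurs x t
  end.

Fixpoint free_in (x : nat) (phi : formula) : Prop :=
  match phi with
  | FPos a | FNeg a => occurs_atom x a
  | FCst _ => False
  | FAnd p q | FOr p q | FOtimes p q | FOplus p q => free_in x p \/ free_in x q
  | FEx y p | FAll y p => y <> x /\ free_in x p
  end.

Definition valuation := gatom S -> bcar B.

Definition upd (e : nat -> term S) (x : nat) (t : term S) : nat -> term S :=
  fun n => if Nat.eqb n x then t else e n.

Definition atom_val (v : valuation) (e : nat -> term S) (a : atom) : bcar B :=
  match a with
  | PAt p l =>
      let a' := (p, map (tsubst e) l) in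
      match ground_atom a' as b return ground_atom a' = b -> bcar B with
      | true => fun h => v (exist _ a' h)
      | false => fun _ => bU B        (* never used for well-formed closed formulas *)
      end eq_refl
  | EqAt s t =>
      if excluded_middle_informative (tsubst e s = tsubst e t) then bT B else bF B
  end.

(* Contrajoin evaluation (v /\ w)(phi) under an assignment e of closed terms to
   the free variables (i.e. the value of the closed formula phi[e]).
   The ordinary value v(phi) is ev v v. *)
Fixpoint ev (v w : valuation) (e : nat -> term S) (phi : formula) : bcar B :=
  match phi with
  | FPos a => atom_val v e a
  | FNeg a => bneg B (atom_val w e a)
  | FCst b => b
  | FAnd p q => @band B (ev v w e p) (ev v w e q)
  | FOr p q => @bor B (ev v w e p) (ev v w e q)
  | FOtimes p q => @botimes B (ev v w e p) (ev v w e q)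
  | FOplus p q => @boplus B (ev v w e p) (ev v w e q)
  | FEx x p => tsup B (fun y => exists t : cterm S, y = ev v w (upd e x (proj1_sig t)) p)
  | FAll x p => tinf B (fun y => exists t : cterm S, y = ev v w (upd e x (proj1_sig t)) p)
  end.

(* A clause  P(x_1,...,x_n) <- phi  : the head predicate is the index in the
   program, cvars = [x_1; ...; x_n] (distinct variables), cbody = phi. *)
Record clause := { cvars : list nat; cbody : formula }.

(* A Fitting program: finitely many clauses, no predicate heading two clauses. *)
Record program := {
  pcl : psym S -> option clause;
  p_finite : exists L : list (psym S), forall p c, pcl p = Some c -> In p L;
  p_wf : forall p c, pcl p = Some c ->
     length (cvars c) = parity S p /\ NoDup (cvars c) /\ wf_formula (cbody c) /\
     (forall x, free_in x (cbody c) -> In x (cvars c))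
}.

Fixpoint env_of (xs : list nat) (ts : list (term S)) (n : nat) : term S :=
  match xs, ts with
  | x :: xs, t :: ts => if Nat.eqb x n then t else env_of xs ts n
  | _, _ => Var n
  end.

Definition vtle (v w : valuation) : Prop := forall A, tle B (v A) (w A).
Definition vkle (v w : valuation) : Prop := forall A, kle B (v A) (w A).
Definition votimes (v w : valuation) : valuation := fun A => @botimes B (v A) (w A).
Definition vtinf (X : valuation -> Prop) : valuation :=
  fun A => tinf B (fun b => exists v, X v /\ b = v A).
Definition vtsup (X : valuation -> Prop) : valuation :=
  fun A => tsup B (fun b => exists v, X v /\ b = v A).
Definition vkinf (X : valuation -> Prop) : valuation :=
  fun A => kinf B (fun b => exists v, X v /\ b = v A).
Definition vksup (X : valuation -> Prop) : valuation :=
  fun A => ksup B (fun b => exists v, X v /\ b = v A).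

(* extremal fixpoints (Knaster–Tarski) of a monotone operator *)
Definition lfp_t (f : valuation -> valuation) : valuation := vtinf (fun x => vtle (f x) x).
Definition gfp_t (f : valuation -> valuation) : valuation := vtsup (fun x => vtle x (f x)).
Definition lfp_k (f : valuation -> valuation) : valuation := vkinf (fun x => vkle (f x) x).
Definition gfp_k (f : valuation -> valuation) : valuation := vksup (fun x => vkle x (f x)).

Variable P : program.

Definition Psi (alpha : bcar B) (v w : valuation) : valuation :=
  fun A => match pcl P (fst (proj1_sig A)) with
           | None => alpha
           | Some c => ev v w (env_of (cvars c) (snd (proj1_sig A))) (cbody c)
           end.

Definition Psi'F (v : valuation) : valuation := lfp_t (fun x => Psi (bF B) x v).
Definition Psi'T (v : valuation) : valuation := gfp_t (fun x => Psi (bT B) x v).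
Definition Psi'U (v : valuation) : valuation := lfp_k (fun x => Psi (bU B) x v).
Definition Psi'I (v : valuation) : valuation := gfp_k (fun x => Psi (bI B) x v).

Definition FixF_U : valuation := lfp_k Psi'F.
Definition FixT_U : valuation := lfp_k Psi'T.
Definition FixU_U : valuation := lfp_k Psi'U.
Definition FixI_U : valuation := lfp_k Psi'I.
End Formulas.

(* Main.v *)
Require Import Defs.
From Stdlib Require Import List Arith Bool ClassicalEpsilon.

Section Aux.
Variable B : bilattice.

Lemma kinf_ext (X Y : B -> Prop) : (forall x, X x <-> Y x) -> kinf B X = kinf B Y.
Proof.
  intro H; apply kle_antisym; apply kinf_greatest; intros x Hx; apply kinf_lb; apply H; auto.
Qed.
Lemma ksup_ext (X Y : B -> Prop) : (forall x, X x <-> Y x) -> ksup B X = ksup B Y.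
Proof.
  intro H; apply kle_antisym; apply ksup_least; intros x Hx; apply ksup_ub; apply H; auto.
Qed.

Lemma img_pair (a b : B) x :
  img B (fun i : bool => if i then a else b) x <-> pair2 B a b x.
Proof.
  unfold img, pair2; split.
  - intros [[|] ->]; auto.
  - intros [->| ->]; [exists true|exists false]; auto.
Qed.

Lemma band_mono a a' b b' : tle B a a' -> tle B b b' -> tle B (band B a b) (band B a' b').
Proof.
  intros Ha Hb; unfold band; apply tinf_greatest; intros x [->| ->].
  - eapply tle_trans; [apply tinf_lb; left; reflexivity| exact Ha].
  - eapply tle_trans; [apply tinf_lb; right; reflexivity| exact Hb].
Qed.
Lemma bor_mono a a' b b' : tle B a a' -> tle B b b' -> tle B (bor B a b) (bor B a' b').
Proof.
  intros Ha Hb; unfold bor; apply tsup_least; intros x [->| ->].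
  - eapply tle_trans; [exact Ha| apply tsup_ub; left; reflexivity].
  - eapply tle_trans; [exact Hb| apply tsup_ub; right; reflexivity].
Qed.
Lemma botimes_mono a a' b b' : tle B a a' -> tle B b b' -> tle B (botimes B a b) (botimes B a' b').
Proof.
  intros Ha Hb.
  destruct (b_interlaced B (fun i : bool => if i then a else b) (fun i => if i then a' else b'))
    as [_ H].
  destruct H as [H _]. { intros [|]; auto. }
  unfold botimes.
  rewrite <- (kinf_ext _ _ (img_pair a b)), <- (kinf_ext _ _ (img_pair a' b')). exact H.
Qed.
Lemma boplus_mono a a' b b' : tle B a a' -> tle B b b' -> tle B (boplus B a b) (boplus B a' b').
Proof.
  intros Ha Hb.
  destruct (b_interlaced B (fun i : bool => if i then a else b) (fun i => if i then a' else b'))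
    as [_ H].
  destruct H as [_ H]. { intros [|]; auto. }
  unfold boplus.
  rewrite <- (ksup_ext _ _ (img_pair a b)), <- (ksup_ext _ _ (img_pair a' b')). exact H.
Qed.
End Aux.

Section Main.
Variables (S : signature) (B : bilattice).

Lemma atom_val_mono (v v' : valuation S B) e a :
  vtle v v' -> tle B (atom_val v e a) (atom_val v' e a).
Proof.
  intro H. destruct a as [p l| s t]; simpl.
  - set (a' := (p, map (tsubst e) l)).
    assert (K : forall (b : bool) (h : ground_atom a' = b),
      tle B (match b as b0 return ground_atom a' = b0 -> bcar B with
             | true => fun h => v (exist _ a' h) | false => fun _ => bU B end h)
            (match b as b0 return ground_atom a' = b0 -> bcar B with
             | true => fun h => v' (exist _ a' h) | false => fun _ => bU B end h)).
    { intros [|] h; [apply H| apply tle_refl]. }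
    apply K.
  - apply tle_refl.
Qed.

Lemma ev_mono (v v' w : valuation S B) phi : vtle v v' ->
  forall e, tle B (ev v w e phi) (ev v' w e phi).
Proof.
  intro H; induction phi; intro e; simpl.
  - apply atom_val_mono; auto.
  - apply tle_refl.
  - apply tle_refl.
  - apply band_mono; auto.
  - apply bor_mono; auto.
  - apply botimes_mono; auto.
  - apply boplus_mono; auto.
  - apply tsup_least; intros x [t ->].
    eapply tle_trans; [apply IHphi| apply tsup_ub; exists t; reflexivity].
  - apply tinf_greatest; intros x [t ->].
    eapply tle_trans; [apply tinf_lb; exists t; reflexivity| apply IHphi].
Qed.

Variable P : program S B.

Lemma Psi_mono alpha (v v' w : valuation S B) :
  vtle v v' -> vtle (Psi P alpha v w) (Psi P alpha v' w).
Proof.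
  intros H A; unfold Psi. destruct (pcl P _); [apply ev_mono; auto| apply tle_refl].
Qed.

Lemma lfp_t_fix (f : valuation S B -> valuation S B) :
  (forall x y, vtle x y -> vtle (f x) (f y)) ->
  forall A, f (lfp_t f) A = lfp_t f A.
Proof.
  intros Hm.
  assert (Hlb : forall x, vtle (f x) x -> vtle (lfp_t f) x).
  { intros x Hx A; unfold lfp_t, vtinf; apply tinf_lb; exists x; auto. }
  assert (H1 : vtle (f (lfp_t f)) (lfp_t f)).
  { intros A; unfold lfp_t at 2, vtinf; apply tinf_greatest; intros b [x [Hx ->]].
    eapply tle_trans; [apply Hm, Hlb, Hx| apply Hx]. }
  assert (H2 : vtle (lfp_t f) (f (lfp_t f))) by (apply Hlb, Hm, H1).
  intro A; apply tle_antisym; auto.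
Qed.

Lemma gfp_t_fix (f : valuation S B -> valuation S B) :
  (forall x y, vtle x y -> vtle (f x) (f y)) ->
  forall A, f (gfp_t f) A = gfp_t f A.
Proof.
  intros Hm.
  assert (Hub : forall x, vtle x (f x) -> vtle x (gfp_t f)).
  { intros x Hx A; unfold gfp_t, vtsup; apply tsup_ub; exists x; auto. }
  assert (H1 : vtle (gfp_t f) (f (gfp_t f))).
  { intros A; unfold gfp_t at 1, vtsup; apply tsup_least; intros b [x [Hx ->]].
    eapply tle_trans; [apply Hx| apply Hm, Hub, Hx]. }
  assert (H2 : vtle (f (gfp_t f)) (gfp_t f)) by (apply Hub, Hm, H1).
  intro A; apply tle_antisym; auto.
Qed.

Lemma U_le_F v : vkle (Psi'U P v) (Psi'F P v).
Proof.
  intro A. unfold Psi'U, lfp_k, vkinf. apply kinf_lb. exists (Psi'F P v); split; auto.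
  intro A'. pose proof (lfp_t_fix (fun x => Psi P (bF B) x v)
    (fun x y H => Psi_mono (bF B) x y v H) A') as Hf.
  unfold Psi'F. rewrite <- Hf. unfold Psi. destruct (pcl P _).
  - apply kle_refl.
  - unfold bU; apply ksup_least; intros _ [].
Qed.

Lemma U_le_T v : vkle (Psi'U P v) (Psi'T P v).
Proof.
  intro A. unfold Psi'U, lfp_k, vkinf. apply kinf_lb. exists (Psi'T P v); split; auto.
  intro A'. pose proof (gfp_t_fix (fun x => Psi P (bT B) x v)
    (fun x y H => Psi_mono (bT B) x y v H) A') as Hf.
  unfold Psi'T. rewrite <- Hf. unfold Psi. destruct (pcl P _).
  - apply kle_refl.
  - unfold bU; apply ksup_least; intros _ [].
Qed.
End Main.

Theorem corollary1 (S : signature) (B : bilattice) (P : program S B) :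
  vkle (FixU_U P) (votimes (FixF_U P) (FixT_U P)).
Proof.
  intro A; unfold votimes, botimes; apply kinf_greatest; intros x [->| ->].
  - unfold FixF_U, lfp_k, vkinf; apply kinf_greatest; intros b [y [Hy ->]].
    unfold FixU_U, lfp_k, vkinf; apply kinf_lb; exists y; split; auto.
    intro A'; eapply kle_trans; [apply U_le_F| apply Hy].
  - unfold FixT_U, lfp_k, vkinf; apply kinf_greatest; intros b [y [Hy ->]].
    unfold FixU_U, lfp_k, vkinf; apply kinf_lb; exists y; split; auto.
    intro A'; eapply kle_trans; [apply U_le_T| apply Hy].
Qed.
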